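(* Let $f,g\in C[0,1]$ be real-valued continuous functions and let $f\cdot g$ denote their pointwise product. Then $$\overline{\dim}_B G(f\cdot g)\le \max\{\overline{\dim}_B G(f),\ \overline{\dim}_B G(g)\}.$$
   Context: $C[0,1]$ is the space of real-valued continuous functions on $[0,1]$. For $f\in C[0,1]$, the graph is $G(f)=\{(x,f(x)):x\in[0,1]\}\subset\mathbb{R}^2$. For a nonempty bounded set $F$, $N_\delta(F)$ is the smallest number of sets of diameter at most $\delta$ covering $F$, and the upper and lower box-counting dimensions are $\overline{\dim}_B F=\limsup_{\delta\to0}\frac{\log N_\delta(F)}{-\log\delta}$ and $\underline{\dim}_B F=\liminf_{\delta\to0}\frac{\log N_\delta(F)}{-\log\delta}$. *)

(* Defs.v *)
From HB Require Import structures.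
From mathcomp Require Import all_boot all_order all_algebra.
From mathcomp Require Import all_classical all_reals all_analysis.
Set Implicit Arguments. Unset Strict Implicit. Unset Printing Implicit Defensive.
Import Order.TTheory GRing.Theory Num.Theory.
Import numFieldNormedType.Exports.
Local Open Scope classical_set_scope.
Local Open Scope ring_scope.

Definition dist2 {R : realType} (p q : R * R) : R :=
  Num.sqrt ((p.1 - q.1) ^+ 2 + (p.2 - q.2) ^+ 2).

Definition diam_le {R : realType} (U : set (R * R)) (d : R) : Prop :=
  forall p q, U p -> U q -> dist2 p q <= d.

(* N_delta(F): smallest number of sets of diameter at most delta covering F
   (+oo if no finite cover exists). *)
Definition Ndelta {R : realType} (F : set (R * R)) (d : R) : \bar R :=
  ereal_inf [set (n%:R)%:E | n in
    [set n : nat | exists U : nat -> set (R * R),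
       (forall i, (i < n)%N -> diam_le (U i) d) /\
       F `<=` \bigcup_(i in [set i : nat | (i < n)%N]) U i]].

Definition box_ratio {R : realType} (F : set (R * R)) (d : R) : \bar R :=
  match Ndelta F d with
  | EFin r => (ln r / (- ln d))%:E
  | _ => +oo%E
  end.

Definition upper_box_dim {R : realType} (F : set (R * R)) : \bar R :=
  limf_esup (box_ratio F) (0^'+).

Definition graph01 {R : realType} (f : R -> R) : set (R * R) :=
  [set p | exists x, 0 <= x <= 1 /\ p = (x, f x)].

(* Main.v *)
Require Import Defs.
From HB Require Import structures.
From mathcomp Require Import all_boot all_order all_algebra.
From mathcomp Require Import all_classical all_reals all_analysis.
From mathcomp Require Import zify ring lra.
Import Order.TTheory GRing.Theory Num.Theory.
Import numFieldNormedType.Exports.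
Local Open Scope classical_set_scope.
Local Open Scope ring_scope.
Definition covers {R : realType} (F : set (R * R)) (d : R) (n : nat) : Prop :=
  exists U : nat -> set (R * R),
       (forall i, (i < n)%N -> diam_le (U i) d) /\
       F `<=` \bigcup_(i in [set i : nat | (i < n)%N]) U i.

Lemma Ndelta_eq {R : realType} (F : set (R * R)) (d : R) n0 :
  covers F d n0 -> exists n, Ndelta F d = (n%:R)%:E /\ covers F d n /\
    (forall n', covers F d n' -> (n <= n')%N).
Proof.
move=> H0.
have exP : exists n, `[< covers F d n >] by exists n0; apply/asboolP.
case: (ex_minnP exP) => n /asboolP Hn Hmin.
exists n; split; last first.
  by split => // n' Hn'; apply: Hmin; apply/asboolP.
apply/eqP; rewrite eq_le; apply/andP; split.
  by apply: ereal_inf_lbound; exists n.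
apply/ereal_infP => _ [n' Hn' <-].
by rewrite lee_fin ler_nat; apply: Hmin; apply/asboolP.
Qed.

Lemma covers_sub {R : realType} (F G : set (R * R)) d n :
  F `<=` G -> covers G d n -> covers F d n.
Proof. by move=> FG [U [HU HG]]; exists U; split => // p /FG /HG. Qed.

Lemma covers_union {R : realType} (A B : set (R * R)) d n1 n2 :
  covers A d n1 -> covers B d n2 -> covers (A `|` B) d (n1 + n2).
Proof.
move=> [U [HU HA]] [V [HV HB]].
exists (fun i => if (i < n1)%N then U i else V (i - n1)%N); split.
  move=> i Hi; case: ifP => Hi1; first exact: HU.
  by apply: HV; move: Hi1 Hi; lia.
move=> p [/HA [i /= Hi Ui]|/HB [i /= Hi Vi]].
  by exists i => /=; [lia | rewrite Hi].
exists (i + n1)%N => /=; first lia.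
by rewrite ltnNge leq_addl /= addnK.
Qed.

Lemma covers0 {R : realType} (d : R) : covers set0 d 0.
Proof. by exists (fun=> set0); split => // p. Qed.

Lemma covers1 {R : realType} (A : set (R * R)) d :
  diam_le A d -> covers A d 1.
Proof.
move=> HA; exists (fun=> A); split => // p Ap; by exists 0%N.
Qed.

Lemma covers_sum {R : realType} d (A : nat -> set (R * R)) (c : nat -> nat) M
  (F : set (R * R)) :
  (forall k, (k < M)%N -> covers (A k) d (c k)) ->
  (forall p, F p -> exists k, (k < M)%N /\ A k p) ->
  covers F d (\sum_(k < M) c k)%N.
Proof.
elim: M F => [|M IH] F HA HF.
  rewrite big_ord0; apply: (covers_sub _ _ _ _ _ (covers0 d)) => p /HF [k []]; lia.
rewrite big_ord_recr /=.
apply: (covers_sub F ([set p | exists k, (k < M)%N /\ A k p] `|` A M)).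
  move=> p /HF [k [Hk Ak]].
  have [kM|kM] := ltnP k M; first by left; exists k.
  by right; have -> : M = k by lia.
apply: covers_union; last exact: HA.
by apply: IH => // k Hk; apply: HA; lia.
Qed.
Definition Xc {R : realType} (w : R) (p : R * R) := p.1 / w.
Definition Yc {R : realType} (w : R) (J : nat) (p : R * R) := p.2 / w + J%:R.
Definition cellset {R : realType} (w : R) (J k j : nat) : set (R * R) :=
  [set p | 0 <= Xc w p /\ Num.truncn (Xc w p) = k /\
           0 <= Yc w J p /\ Num.truncn (Yc w J p) = j].

Lemma truncn_close {R : realType} (a b : R) : 0 <= a -> 0 <= b ->
  Num.truncn a = Num.truncn b -> `|a - b| < 1.
Proof.
move=> a0 b0 e.
have /andP[a1 a2] := truncn_itv a0.
have /andP[b1 b2] := truncn_itv b0.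
rewrite e in a1 a2.
rewrite -natr1 in a2 b2.
rewrite ltr_norml; apply/andP; split; lra.
Qed.

Lemma truncn_le_diff {R : realType} (a b : R) d : 0 <= a -> 0 <= b ->
  a <= b + d%:R -> (Num.truncn a <= Num.truncn b + d)%N.
Proof.
move=> a0 b0 ab.
have /andP[a1 a2] := truncn_itv a0.
have /andP[b1 b2] := truncn_itv b0.
rewrite -natr1 in a2 b2.
have : (Num.truncn a)%:R < ((Num.truncn b + d)%N + 1)%:R :> R.
  rewrite !natrD; lra.
by rewrite ltr_nat addn1 ltnS.
Qed.

Lemma dist2_ge1 {R : realType} (p q : R * R) : `|p.1 - q.1| <= dist2 p q.
Proof.
rewrite /dist2 -sqrtr_sqr ler_sqrt; last by rewrite addr_ge0 // sqr_ge0.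
by rewrite lerDl sqr_ge0.
Qed.

Lemma dist2_ge2 {R : realType} (p q : R * R) : `|p.2 - q.2| <= dist2 p q.
Proof.
rewrite /dist2 -sqrtr_sqr ler_sqrt; last by rewrite addr_ge0 // sqr_ge0.
by rewrite lerDr sqr_ge0.
Qed.

Lemma cellset_diam {R : realType} (w : R) J k j : 0 < w ->
  diam_le (cellset w J k j) (2 * w).
Proof.
move=> w0 p q [px0 [pxk [py0 pyj]]] [qx0 [qxk [qy0 qyj]]].
have hx := truncn_close _ _ px0 qx0 (etrans pxk (esym qxk)).
have hy := truncn_close _ _ py0 qy0 (etrans pyj (esym qyj)).
rewrite /Xc /Yc in hx hy.
have ex : p.1 / w - q.1 / w = (p.1 - q.1) / w by rewrite mulrBl.
have ey : p.2 / w + J%:R - (q.2 / w + J%:R) = (p.2 - q.2) / w.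
  by rewrite mulrBl; ring.
have wi : `|w^-1| = w^-1 by rewrite gtr0_norm // invr_gt0.
rewrite ex ey !normrM wi in hx hy.
rewrite ltr_pdivrMr // mul1r in hx; rewrite ltr_pdivrMr // mul1r in hy.
have hw2 : 0 <= 2 * w by lra.
rewrite /dist2 -(ger0_norm hw2) -sqrtr_sqr.
rewrite ler_sqrt; last exact: sqr_ge0.
move: hx hy; rewrite !ltr_norml => /andP[hx1 hx2] /andP[hy1 hy2].
have h1 : (p.1 - q.1) ^+ 2 <= w ^+ 2 by nra.
have h2 : (p.2 - q.2) ^+ 2 <= w ^+ 2 by nra.
have : 0 <= w ^+ 2 by exact: sqr_ge0.
rewrite exprMn; nra.
Qed.
Lemma win lo hi M :
  (\sum_(k < M) ((lo <= k) && (k <= hi) : nat) = minn M hi.+1 - lo)%N.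
Proof.
elim: M => [|M IH]; first by rewrite big_ord0 min0n.
rewrite big_ord_recr /= IH.
case: (leqP lo M) => /= h1; case: (leqP M hi) => /= h2; lia.
Qed.

Lemma sum_ge_term (F : nat -> nat) N j : (j < N)%N ->
  (F j <= \sum_(i < N) F i)%N.
Proof.
move=> hj; by rewrite (bigD1 (Ordinal hj)) //= leq_addr.
Qed.

Definition hit {R : realType} (w : R) (J : nat) (phi : R -> R) (k j : nat) : bool :=
  `[< exists x, 0 <= x <= 1 /\ cellset w J k j (x, phi x) >].

Definition tot {R : realType} (w : R) (J : nat) (phi : R -> R) (M N : nat) : nat :=
  (\sum_(k < M) \sum_(j < N) hit w J phi k j)%N.

Definition inrange {R : realType} (w : R) (J : nat) (phi : R -> R) (M N : nat) :=
  forall x, 0 <= x <= 1 ->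
    (Num.truncn (Xc w (x, phi x)) < M)%N /\ 0 <= Yc w J (x, phi x) /\
    (Num.truncn (Yc w J (x, phi x)) < N)%N.

Lemma Xc_ge0 {R : realType} (w : R) (x y : R) : 0 < w -> 0 <= x -> 0 <= Xc w (x, y).
Proof. by move=> w0 x0; rewrite /Xc /= divr_ge0 // ltW. Qed.

Lemma Xc_shift {R : realType} (w : R) (p q : R * R) : 0 < w ->
  dist2 p q <= 2 * w -> Xc w p <= Xc w q + 2%:R.
Proof.
move=> w0 h; have := le_trans (dist2_ge1 p q) h; rewrite ler_norml => /andP[_ h2].
rewrite /Xc ler_pdivrMr // mulrDl divfK ?gt_eqF //; lra.
Qed.

Lemma Yc_shift {R : realType} (w : R) J (p q : R * R) : 0 < w ->
  dist2 p q <= 2 * w -> Yc w J p <= Yc w J q + 2%:R.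
Proof.
move=> w0 h; have := le_trans (dist2_ge2 p q) h; rewrite ler_norml => /andP[_ h2].
rewrite /Yc.
have : p.2 / w <= q.2 / w + 2%:R.
  rewrite ler_pdivrMr // mulrDl divfK ?gt_eqF //; lra.
lra.
Qed.

Lemma total_le_cover {R : realType} (w : R) J phi M N n : 0 < w ->
  inrange w J phi M N -> covers (graph01 phi) (2 * w) n ->
  (tot w J phi M N <= 25 * n)%N.
Proof.
move=> w0 rng [U [HU HG]]; rewrite /tot.
pose meet (i k j : nat) : bool :=
  `[< exists x, 0 <= x <= 1 /\ cellset w J k j (x, phi x) /\ U i (x, phi x) >].
apply: (@leq_trans (\sum_(k < M) \sum_(j < N) \sum_(i < n) meet i k j)).
  apply: leq_sum => k _; apply: leq_sum => j _.
  case hk: (hit w J phi k j) => //.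
  move: hk => /asboolP [x [hx hc]].
  have [i /= hi Ui] : (\bigcup_(i in [set i : nat | (i < n)%N]) U i) (x, phi x).
    by apply: HG; exists x.
  apply: (@leq_trans (meet i k j)); last exact: (sum_ge_term (fun i => meet i k j)).
  by rewrite lt0n eqb0 negbK; apply/asboolP; exists x.
under eq_bigr => k _ do rewrite exchange_big.
rewrite exchange_big /=.
have inner : forall i : nat, (i < n)%N -> (\sum_(k < M) \sum_(j < N) meet i k j <= 25)%N.
  move=> i hi.
  case: (pselect (exists x0, 0 <= x0 <= 1 /\ U i (x0, phi x0))); last first.
    move=> nex; rewrite big1 // => k _; rewrite big1 // => j _.
    apply/eqP; rewrite eqb0; apply/asboolP => -[x [hx [_ Ux]]].
    by apply: nex; exists x.
  move=> [x0 [hx0 U0]].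
  set k0 := Num.truncn (Xc w (x0, phi x0)).
  set j0 := Num.truncn (Yc w J (x0, phi x0)).
  apply: (@leq_trans (\sum_(k < M) \sum_(j < N)
     (((k0 - 2 <= k) && (k <= k0 + 2)) * ((j0 - 2 <= j) && (j <= j0 + 2))))%N).
    apply: leq_sum => k _; apply: leq_sum => j _.
    case hm: (meet i k j) => //.
    move: hm => /asboolP [x [hx [[cx1 [cx2 [cy1 cy2]]] Ux]]].
    have d1 := HU i hi _ _ Ux U0.
    have d2 := HU i hi _ _ U0 Ux.
    have ka := truncn_le_diff _ _ 2 cx1 (Xc_ge0 _ _ (phi x0) w0 (proj1 (andP hx0)))
       (Xc_shift _ _ _ w0 d1).
    have kb := truncn_le_diff _ _ 2 (Xc_ge0 _ _ (phi x0) w0 (proj1 (andP hx0))) cx1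
       (Xc_shift _ _ _ w0 d2).
    have y0 := proj1 (proj2 (rng x0 hx0)).
    have ja := truncn_le_diff _ _ 2 cy1 y0 (Yc_shift _ J _ _ w0 d1).
    have jb := truncn_le_diff _ _ 2 y0 cy1 (Yc_shift _ J _ _ w0 d2).
    rewrite cx2 cy2 in ka kb ja jb.
    rewrite -/k0 -/j0 in ka kb ja jb.
    have -> : ((k0 - 2 <= k) && (k <= k0 + 2))%N by apply/andP; split; lia.
    have -> : ((j0 - 2 <= j) && (j <= j0 + 2))%N by apply/andP; split; lia.
    by [].
  under eq_bigr do rewrite -big_distrr /=.
  rewrite -big_distrl /= !win.
  apply: (@leq_trans (5 * 5)%N) => //; apply: leq_mul; lia.
apply: (@leq_trans (\sum_(i < n) 25)%N).
  by apply: leq_sum => i _; apply: inner.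
by rewrite sum_nat_const card_ord mulnC.
Qed.

Lemma total_ge_M {R : realType} (w : R) J phi M N : 0 < w ->
  inrange w J phi M N -> (forall k, (k < M)%N -> k%:R * w <= 1) ->
  (M <= tot w J phi M N)%N.
Proof.
move=> w0 rng hM; rewrite /tot.
apply: (@leq_trans (\sum_(k < M) 1)%N); first by rewrite sum_nat_const card_ord muln1.
apply: leq_sum => k _.
have hx : 0 <= k%:R * w <= 1.
  by rewrite hM ?ltn_ord // andbT; apply: mulr_ge0 => //; exact: ltW.
have [_ [hy1 hy2]] := rng _ hx.
apply: (@leq_trans (hit w J phi k (Num.truncn (Yc w J (k%:R * w, phi (k%:R * w)))))).
  rewrite lt0n eqb0 negbK; apply/asboolP; exists (k%:R * w); split => //.
  split; first by rewrite /Xc /=; apply: divr_ge0; [case/andP: hx|exact: ltW].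
  split; last by [].
  by rewrite /Xc /= mulfK ?gt_eqF // natrK.
exact: (sum_ge_term (fun j => hit w J phi k j)).
Qed.

Lemma cover_hits {R : realType} (w : R) J phi M N : 0 < w ->
  inrange w J phi M N -> covers (graph01 phi) (2 * w) (tot w J phi M N).
Proof.
move=> w0 rng; rewrite /tot.
apply: (covers_sum (2 * w) (fun k => [set p | graph01 phi p /\
             Num.truncn (Xc w p) = k]) (fun k => \sum_(j < N) hit w J phi k j)%N); last first.
  move=> p [x [hx ->]]; exists (Num.truncn (Xc w (x, phi x))).
  by split; [exact: (proj1 (rng x hx)) | split => //; exists x].
move=> k hk.
apply: (covers_sum (2 * w) (fun j => if hit w J phi k j then cellset w J k j else set0)
  (fun j => nat_of_bool (hit w J phi k j))).
  move=> j hj; case: (hit w J phi k j) => /=.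
    exact: covers1 (cellset_diam _ _ _ _ w0).
  exact: covers0.
move=> p [[x [hx ->]] hxk]; have [_ [hy1 hy2]] := rng x hx.
exists (Num.truncn (Yc w J (x, phi x))); split => //.
have hc : cellset w J k (Num.truncn (Yc w J (x, phi x))) (x, phi x).
  split; first by rewrite /Xc /=; apply: divr_ge0; [case/andP: hx|exact: ltW].
  by [].
have -> : hit w J phi k (Num.truncn (Yc w J (x, phi x))).
  by apply/asboolP; exists x.
exact: hc.
Qed.

Lemma ivt2 {R : realType} (phi : R -> R) x y v :
  {within `[0, 1], continuous phi} -> 0 <= x <= 1 -> 0 <= y <= 1 ->
  phi x <= v <= phi y ->
  exists z, [/\ Num.min x y <= z, z <= Num.max x y & phi z = v].
Proof.
move=> hc /andP[hx1 hx2] /andP[hy1 hy2] /andP[h1 h2].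
have [xy|yx] := leP x y.
  have hc' : {within `[x, y], continuous phi}.
    apply: (continuous_subspaceW _ hc) => t; rewrite /= !in_itv /= => /andP[a b].
    by rewrite (le_trans hx1 a) (le_trans b hy2).
  have hv' : Num.min (phi x) (phi y) <= v <= Num.max (phi x) (phi y).
    rewrite ge_min le_max h1 h2 /=; by rewrite orbT.
  have [z hz hzv] := @IVT R phi x y v xy hc' hv'.
  exists z; move: hz; rewrite in_itv /= => /andP[a b].
  by split => //; rewrite ?ge_min ?le_max ?a ?b ?orbT.
have yx' := ltW yx.
have hc' : {within `[y, x], continuous phi}.
  apply: (continuous_subspaceW _ hc) => t; rewrite /= !in_itv /= => /andP[a b].
  by rewrite (le_trans hy1 a) (le_trans b hx2).
have hv' : Num.min (phi y) (phi x) <= v <= Num.max (phi y) (phi x).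
  rewrite ge_min le_max h1 h2 /=; by rewrite orbT.
have [z hz hzv] := @IVT R phi y x v yx' hc' hv'.
exists z; move: hz; rewrite in_itv /= => /andP[a b].
by split => //; rewrite ?ge_min ?le_max ?a ?b ?orbT.
Qed.
Lemma col_osc {R : realType} (w : R) J phi M N x y k : 0 < w ->
  inrange w J phi M N -> {within `[0, 1], continuous phi} ->
  0 <= x <= 1 -> 0 <= y <= 1 ->
  Num.truncn (x / w) = k -> Num.truncn (y / w) = k ->
  phi y - phi x < w * (\sum_(j < N) hit w J phi k j)%N%:R.
Proof.
move=> w0 rng hc hx hy hxk hyk.
have [_ [Yx0 jxN]] := rng x hx.
have [_ [Yy0 jyN]] := rng y hy.
set jx := Num.truncn (Yc w J (x, phi x)) in jxN.
set jy := Num.truncn (Yc w J (y, phi y)) in jyN.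
have xw0 : 0 <= x / w by apply: divr_ge0; [case/andP: hx | exact: ltW].
have yw0 : 0 <= y / w by apply: divr_ge0; [case/andP: hy | exact: ltW].
have hitx : hit w J phi k jx.
  by apply/asboolP; exists x; split => //; split.
have A1 : (1 <= \sum_(j < N) hit w J phi k j)%N.
  apply: (@leq_trans (hit w J phi k jx)); first by rewrite hitx.
  exact: (sum_ge_term (fun j => hit w J phi k j)).
have [yx|xy] := leP (phi y) (phi x).
  have : 1 <= (\sum_(j < N) hit w J phi k j)%N%:R :> R by rewrite ler1n.
  move=> h1; have : w <= w * (\sum_(j < N) hit w J phi k j)%N%:R.
    by rewrite ler_peMr // ltW.
  lra.
have hall : forall j, (jx <= j <= jy)%N -> hit w J phi k j.
  move=> j /andP[a b].
  case: (eqVneq j jx) => [->//|ne].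
  have jxj : (jx < j)%N by rewrite ltn_neqAle eq_sym ne a.
  pose v := (j%:R - J%:R) * w.
  have /andP[_ hYx] := truncn_itv Yx0.
  have /andP[hYy _] := truncn_itv Yy0.
  rewrite -/jx in hYx; rewrite -/jy in hYy.
  have e1 : (jx.+1)%:R <= j%:R :> R by rewrite ler_nat.
  have e2 : j%:R <= jy%:R :> R by rewrite ler_nat.
  rewrite /Yc /= in hYx hYy.
  have hv1 : phi x <= v.
    have : phi x / w < j%:R - J%:R by lra.
    by rewrite ltr_pdivrMr // /v => /ltW.
  have hv2 : v <= phi y.
    have : j%:R - J%:R <= phi y / w by lra.
    by rewrite ler_pdivlMr // /v.
  have [z [z1 z2 hz]] := ivt2 _ _ _ _ hc hx hy (introT andP (conj hv1 hv2)).
  have hz0 : 0 <= z.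
    apply: le_trans z1; rewrite le_min; case/andP: hx => -> _.
    by case/andP: hy => -> _.
  have hz1 : z <= 1.
    apply: le_trans z2 _; rewrite ge_max; case/andP: hx => _ ->.
    by case/andP: hy => _ ->.
  have zw0 : 0 <= z / w by apply: divr_ge0 => //; exact: ltW.
  have zk : Num.truncn (z / w) = k.
    apply/eqP; rewrite eqn_leq; apply/andP; split.
      move: z2; rewrite le_max => /orP[] h.
        by rewrite -hxk; apply: le_truncn; rewrite ler_pM2r // invr_gt0.
      by rewrite -hyk; apply: le_truncn; rewrite ler_pM2r // invr_gt0.
    move: z1; rewrite ge_min => /orP[] h.
      by rewrite -{1}hxk; apply: le_truncn; rewrite ler_pM2r // invr_gt0.
    by rewrite -{1}hyk; apply: le_truncn; rewrite ler_pM2r // invr_gt0.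
  have Yz : Yc w J (z, phi z) = j%:R.
    by rewrite /Yc /= hz /v mulfK ?gt_eqF //; ring.
  apply/asboolP; exists z; split; first by rewrite hz0 hz1.
  split; first exact: zw0.
  split; first exact: zk.
  by rewrite Yz natrK; split.
have jxy : (jx <= jy)%N.
  apply: le_truncn; rewrite /Yc /= lerD2r ler_pM2r ?invr_gt0 //; exact: ltW.
have Abig : (jy.+1 - jx <= \sum_(j < N) hit w J phi k j)%N.
  apply: (@leq_trans (\sum_(j < N) ((jx <= j) && (j <= jy)))%N).
    rewrite win; apply: leq_sub2r.
  lia.
  apply: leq_sum => j _.
  case h: ((jx <= j) && (j <= jy))%N => //.
  by rewrite lt0n eqb0 negbK; apply: hall.
have /andP[hYx _] := truncn_itv Yx0.
have /andP[_ hYy] := truncn_itv Yy0.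
rewrite -/jx in hYx; rewrite -/jy in hYy.
rewrite /Yc /= in hYx hYy.
have : (jy.+1 - jx)%N%:R <= (\sum_(j < N) hit w J phi k j)%N%:R :> R by rewrite ler_nat.
rewrite natrB; last by apply: (leq_trans jxy).
move=> hA.
have : phi y / w - phi x / w < (jy.+1)%:R - jx%:R by lra.
rewrite -mulrBl ltr_pdivrMr // => h.
have : ((jy.+1)%:R - jx%:R) * w <= (\sum_(j < N) hit w J phi k j)%N%:R * w.
  by rewrite ler_pM2r.
rewrite mulrC; lra.
Qed.

Lemma col_osc_abs {R : realType} (w : R) J phi M N x y k : 0 < w ->
  inrange w J phi M N -> {within `[0, 1], continuous phi} ->
  0 <= x <= 1 -> 0 <= y <= 1 ->
  Num.truncn (x / w) = k -> Num.truncn (y / w) = k ->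
  `|phi y - phi x| <= w * (\sum_(j < N) hit w J phi k j)%N%:R.
Proof.
move=> w0 rng hc hx hy hxk hyk.
have h1 := col_osc _ _ _ _ _ _ _ _ w0 rng hc hx hy hxk hyk.
have h2 := col_osc _ _ _ _ _ _ _ _ w0 rng hc hy hx hyk hxk.
rewrite ler_norml; apply/andP; split; lra.
Qed.

Lemma col_h {R : realType} (w : R) (J : nat) (f g : R -> R) (M N k : nat) (Mb : R) (Mn : nat) : 0 < w ->
  inrange w J f M N -> inrange w J g M N ->
  inrange w J (fun x => f x * g x) M N ->
  {within `[0, 1], continuous f} -> {within `[0, 1], continuous g} ->
  (forall x, 0 <= x <= 1 -> `|f x| <= Mb /\ `|g x| <= Mb) -> Mb <= Mn%:R ->
  (\sum_(j < N) hit w J (fun x => (f x * g x)%R) k j <=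
    2 * (Mn * (\sum_(j < N) hit w J f k j + \sum_(j < N) hit w J g k j)) + 1)%N.
Proof.
move=> w0 rf rg rh cf cg hb hMn.
set Af := (\sum_(j < N) hit w J f k j)%N.
set Ag := (\sum_(j < N) hit w J g k j)%N.
set D := (Mn * (Af + Ag))%N.
have key : forall x x0, 0 <= x <= 1 -> 0 <= x0 <= 1 ->
    Num.truncn (x / w) = k -> Num.truncn (x0 / w) = k ->
    Yc w J (x, f x * g x) <= Yc w J (x0, f x0 * g x0) + D%:R.
  move=> x x0 hx hx0 hxk hx0k.
  have hF := col_osc_abs _ _ _ _ _ _ _ _ w0 rf cf hx0 hx hx0k hxk.
  have hG := col_osc_abs _ _ _ _ _ _ _ _ w0 rg cg hx0 hx hx0k hxk.
  rewrite -/Af in hF; rewrite -/Ag in hG.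
  have [hfx _] := hb x hx.
  have [_ hgx0] := hb x0 hx0.
  move: hF hG hfx hgx0; rewrite !ler_norml => /andP[a1 a2] /andP[b1 b2] /andP[c1 c2] /andP[d1 d2].
  have Af0 : 0 <= Af%:R :> R by [].
  have Ag0 : 0 <= Ag%:R :> R by [].
  have hprod : f x * g x - f x0 * g x0 <= w * D%:R.
    have -> : f x * g x - f x0 * g x0 = f x * (g x - g x0) + g x0 * (f x - f x0) by ring.
    rewrite /D natrM natrD.
    have wA : 0 <= w * Ag%:R by apply: mulr_ge0 => //; exact: ltW.
    have wB : 0 <= w * Af%:R by apply: mulr_ge0 => //; exact: ltW.
    have e1 : f x * (g x - g x0) <= Mb * (w * Ag%:R) by nra.
    have e2 : g x0 * (f x - f x0) <= Mb * (w * Af%:R) by nra.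
    nra.
  rewrite /Yc /=.
  have : (f x * g x - f x0 * g x0) / w <= D%:R by rewrite ler_pdivrMr // [D%:R * w]mulrC.
  rewrite mulrBl; lra.
case: (pselect (exists x0, 0 <= x0 <= 1 /\ Num.truncn (x0 / w) = k)); last first.
  move=> nex; rewrite big1 // => j _.
  apply/eqP; rewrite eqb0; apply/asboolP => -[x [hx [_ [hk _]]]].
  by apply: nex; exists x.
move=> [x0 [hx0 hk0]].
have [_ [y0 _]] := rh x0 hx0.
set j0 := Num.truncn (Yc w J (x0, f x0 * g x0)).
apply: (@leq_trans (\sum_(j < N) ((j0 - D <= j) && (j <= j0 + D)))%N).
  apply: leq_sum => j _.
  case hm: (hit w J (fun x => (f x * g x)%R) k j) => //.
  move: hm => /asboolP [x [hx [cx1 [cx2 [cy1 cy2]]]]].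
  rewrite /Xc /= in cx2.
  have ka := truncn_le_diff _ _ D cy1 y0 (key x x0 hx hx0 cx2 hk0).
  have kb := truncn_le_diff _ _ D y0 cy1 (key x0 x hx0 hx hk0 cx2).
  rewrite cy2 -/j0 in ka kb.
  have -> : ((j0 - D <= j) && (j <= j0 + D))%N by apply/andP; split; lia.
  by [].
rewrite win; lia.
Qed.

Lemma total_h_le {R : realType} (w : R) (J : nat) (f g : R -> R) (M N : nat) (Mb : R) (Mn : nat) :
  0 < w ->
  inrange w J f M N -> inrange w J g M N ->
  inrange w J (fun x => (f x * g x)%R) M N ->
  {within `[0, 1], continuous f} -> {within `[0, 1], continuous g} ->
  (forall x, 0 <= x <= 1 -> `|f x| <= Mb /\ `|g x| <= Mb) -> Mb <= Mn%:R ->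
  (M <= tot w J f M N)%N ->
  (tot w J (fun x => (f x * g x)%R) M N <=
     (2 * Mn + 1) * (tot w J f M N + tot w J g M N))%N.
Proof.
move=> w0 rf rg rh cf cg hb hMn hM.
have h1 : (tot w J (fun x => (f x * g x)%R) M N <=
   \sum_(k < M) (2 * (Mn * (\sum_(j < N) hit w J f k j + \sum_(j < N) hit w J g k j)) + 1))%N.
  by apply: leq_sum => k _; apply: (col_h _ _ _ _ _ _ _ _ _ w0 rf rg rh cf cg hb hMn).
rewrite big_split /= sum_nat_const card_ord muln1 -big_distrr /= -big_distrr /= big_split /= in h1.
rewrite /tot in hM h1 *.
move: h1 hM.
set A := (\sum_(k < M) \sum_(j < N) hit w J f k j)%N.
set B := (\sum_(k < M) \sum_(j < N) hit w J g k j)%N.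
set H := (\sum_(k < M) \sum_(j < N) hit w J _ k j)%N.
move=> h1 hM.
rewrite mulnDl mul1n.
apply: (leq_trans h1).
rewrite -mulnA.
lia.
Qed.

Lemma inrange_of {R : realType} (w : R) (Mb : R) phi : 0 < w -> 0 <= Mb ->
  (forall x, 0 <= x <= 1 -> `|phi x| <= Mb) ->
  inrange w (Num.truncn (Mb / w)).+1 phi (Num.truncn (1 / w)).+1
     ((Num.truncn (Mb / w)).+1 + (Num.truncn (Mb / w)).+1).+1.
Proof.
move=> w0 Mb0 hb x hx.
set J := (Num.truncn (Mb / w)).+1.
have hJ : Mb / w < J%:R by rewrite /J truncnS_gt.
have hbx := hb x hx; move: hbx; rewrite ler_norml => /andP[b1 b2].
have e1 : - (Mb / w) <= phi x / w.
  by rewrite -mulNr ler_pM2r ?invr_gt0.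
have e2 : phi x / w <= Mb / w by rewrite ler_pM2r ?invr_gt0.
case/andP: hx => x0 x1.
split.
  rewrite /Xc /= ltnS; apply: le_truncn; rewrite ler_pM2r ?invr_gt0 //.
split; first by rewrite /Yc /=; lra.
rewrite /Yc /= truncn_lt_nat; last lra.
rewrite -addn1 !natrD; lra.
Qed.
Lemma per_delta {R : realType} (f g : R -> R) (Mb : R) (Mn : nat) (d : R) :
  {within `[0, 1], continuous f} -> {within `[0, 1], continuous g} ->
  0 <= Mb ->
  (forall x, 0 <= x <= 1 -> [/\ `|f x| <= Mb, `|g x| <= Mb & `|f x * g x| <= Mb]) ->
  Mb <= Mn%:R -> 0 < d ->
  exists nf ng nh : nat,
    [/\ Ndelta (graph01 f) d = (nf%:R)%:E, Ndelta (graph01 g) d = (ng%:R)%:E,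
        Ndelta (graph01 (fun x => (f x * g x)%R)) d = (nh%:R)%:E &
        [/\ (1 <= nf)%N, (1 <= ng)%N, (1 <= nh)%N &
            (nh <= 25 * (2 * Mn + 1) * (nf + ng))%N]].
Proof.
move=> cf cg Mb0 hb hMn d0.
set w := d / 2.
have w0 : 0 < w by rewrite /w; lra.
have dw : d = 2 * w by rewrite /w; field.
set J := (Num.truncn (Mb / w)).+1.
set M := (Num.truncn (1 / w)).+1.
set N := (J + J).+1.
have rf : inrange w J f M N.
  by apply: inrange_of => // x hx; case: (hb x hx).
have rg : inrange w J g M N.
  by apply: inrange_of => // x hx; case: (hb x hx).
have rh : inrange w J (fun x => (f x * g x)%R) M N.
  by apply: inrange_of => // x hx; case: (hb x hx).
have hMk : forall k, (k < M)%N -> k%:R * w <= 1.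
  move=> k; rewrite /M ltnS => hk.
  have : k%:R <= 1 / w.
    apply: (@le_trans _ _ (Num.truncn (1 / w))%:R); first by rewrite ler_nat.
    by rewrite truncn_le divr_ge0 // ltW.
  by rewrite ler_pdivlMr.
rewrite dw.
have [nf [Ef [Cf minf]]] := Ndelta_eq _ _ _ (cover_hits _ _ _ _ _ w0 rf).
have [ng [Eg [Cg ming]]] := Ndelta_eq _ _ _ (cover_hits _ _ _ _ _ w0 rg).
have [nh [Eh [Ch minh]]] := Ndelta_eq _ _ _ (cover_hits _ _ _ _ _ w0 rh).
have tf := total_le_cover _ _ _ _ _ _ w0 rf Cf.
have tg := total_le_cover _ _ _ _ _ _ w0 rg Cg.
have th := total_le_cover _ _ _ _ _ _ w0 rh Ch.
have Mf := total_ge_M _ _ _ _ _ w0 rf hMk.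
have Mg := total_ge_M _ _ _ _ _ w0 rg hMk.
have Mh := total_ge_M _ _ _ _ _ w0 rh hMk.
have hbfg : forall x, 0 <= x <= 1 -> `|f x| <= Mb /\ `|g x| <= Mb.
  by move=> x hx; case: (hb x hx).
have key := total_h_le _ _ _ _ _ _ _ _ w0 rf rg rh cf cg hbfg hMn Mf.
have nhle := minh _ (cover_hits _ _ _ _ _ w0 rh).
exists nf, ng, nh; split => //.
have M1 : (1 <= M)%N by [].
split; try lia.
apply: (leq_trans nhle); apply: (leq_trans key).
rewrite -mulnA [(25 * _)%N]mulnC -mulnA leq_mul2l; apply/orP; right.
lia.
Qed.
Lemma ratio_bound {R : realType} (f g : R -> R) (Mb : R) (Mn : nat) (d : R) :
  {within `[0, 1], continuous f} -> {within `[0, 1], continuous g} ->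
  0 <= Mb ->
  (forall x, 0 <= x <= 1 -> [/\ `|f x| <= Mb, `|g x| <= Mb & `|f x * g x| <= Mb]) ->
  Mb <= Mn%:R -> 0 < d -> d < 1 ->
  exists xf xg xh : R,
    [/\ box_ratio (graph01 f) d = xf%:E, box_ratio (graph01 g) d = xg%:E,
        box_ratio (graph01 (fun x => (f x * g x)%R)) d = xh%:E &
        xh <= ln ((2 * (25 * (2 * Mn + 1)))%N%:R : R) / (- ln d) + Num.max xf xg].
Proof.
move=> cf cg Mb0 hb hMn d0 d1.
have [nf [ng [nh [Ef Eg Eh [nf1 ng1 nh1 hn]]]]] := per_delta _ _ _ _ _ cf cg Mb0 hb hMn d0.
rewrite /box_ratio Ef Eg Eh.
eexists; eexists; eexists; split; [reflexivity|reflexivity|reflexivity|].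
set C := (25 * (2 * Mn + 1))%N.
have L0 : 0 < - ln d by rewrite oppr_gt0 ln_lt0 // d0 d1.
have pos : forall n : nat, (1 <= n)%N -> (n%:R : R) \is Num.pos.
  by move=> n hn'; rewrite posrE ltr0n.
have C1 : (1 <= 2 * C)%N by rewrite /C; lia.
set mx := maxn nf ng.
have mx1 : (1 <= mx)%N by rewrite /mx; lia.
have h1 : ln (nh%:R : R) <= ln ((2 * C * mx)%N%:R).
  rewrite ler_ln ?pos //; last by rewrite muln_gt0 C1.
  rewrite ler_nat; have hs : (nf + ng <= 2 * mx)%N by rewrite /mx; lia.
  by apply: (leq_trans hn); rewrite -/C (mulnC 2 C) -mulnA leq_mul2l hs orbT.
rewrite natrM lnM ?pos // in h1.
have h2 : ln (mx%:R : R) <= ln (nf%:R) \/ ln (mx%:R : R) <= ln (ng%:R).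
  case: (leqP nf ng) => h.
    by right; have -> : mx = ng by apply/maxn_idPr.
  by left; have -> : mx = nf by apply/maxn_idPl; exact: ltnW.
have h3 : ln (nh%:R : R) / - ln d <=
          (ln (2 * C)%N%:R + ln (mx%:R : R)) / - ln d.
  by rewrite ler_pM2r ?invr_gt0.
apply: (le_trans h3); rewrite mulrDl lerD2l le_max.
by case: h2 => h; apply/orP; [left|right]; rewrite ler_pM2r ?invr_gt0.
Qed.
Theorem lemma3p1 (R : realType) (f g : R -> R)
  (hf : {within `[0, 1], continuous f})
  (hg : {within `[0, 1], continuous g}) :
  (upper_box_dim (graph01 (fun x => (f x * g x)%R))
   <= maxe (upper_box_dim (graph01 f)) (upper_box_dim (graph01 g)))%E.
Proof.
have h01 : (0 : R) <= 1 by [].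
have [c1 _ hmaxf] := EVT_max h01 hf.
have [c2 _ hminf] := EVT_min h01 hf.
have [c3 _ hmaxg] := EVT_max h01 hg.
have [c4 _ hming] := EVT_min h01 hg.
set Mf := `|f c1| + `|f c2|.
set Mg := `|g c3| + `|g c4|.
have Mf0 : 0 <= Mf by rewrite /Mf addr_ge0.
have Mg0 : 0 <= Mg by rewrite /Mg addr_ge0.
have bf : forall x, 0 <= x <= 1 -> `|f x| <= Mf.
  move=> x hx; have xin : x \in `[0, 1] by rewrite in_itv.
  have := hmaxf x xin; have := hminf x xin.
  have := ler_norm (f c1); have := ler_norm (- f c2); rewrite normrN.
  move=> a1 a2 a3 a4; rewrite /Mf ler_norml; have n1 := normr_ge0 (f c1); have n2 := normr_ge0 (f c2); apply/andP; split; lra.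
have bg : forall x, 0 <= x <= 1 -> `|g x| <= Mg.
  move=> x hx; have xin : x \in `[0, 1] by rewrite in_itv.
  have := hmaxg x xin; have := hming x xin.
  have := ler_norm (g c3); have := ler_norm (- g c4); rewrite normrN.
  move=> a1 a2 a3 a4; rewrite /Mg ler_norml.
  have n1 := normr_ge0 (g c3); have n2 := normr_ge0 (g c4); apply/andP; split; lra.
set Mb := Mf + Mg + Mf * Mg.
have Mb0 : 0 <= Mb by rewrite /Mb; apply: addr_ge0; [apply: addr_ge0|apply: mulr_ge0].
have hb : forall x, 0 <= x <= 1 ->
    [/\ `|f x| <= Mb, `|g x| <= Mb & `|f x * g x| <= Mb].
  move=> x hx; have := bf x hx; have := bg x hx.
  have := normr_ge0 (f x); have := normr_ge0 (g x).
  move=> n1 n2 h1 h2.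
  have hp : `|f x| * `|g x| <= Mf * Mg by apply: ler_pM.
  rewrite normrM /Mb; split; nra.
set Mn := (Num.truncn Mb).+1.
have hMn : Mb <= Mn%:R by apply: ltW; exact: truncnS_gt.
set K := ln ((2 * (25 * (2 * Mn + 1)))%N%:R : R).
have K0 : 0 <= K by apply: ln_ge0; rewrite ler1n; lia.
rewrite /upper_box_dim.
set Lf := limf_esup (box_ratio (graph01 f)) 0^'+.
set Lg := limf_esup (box_ratio (graph01 g)) 0^'+.
set Lh := limf_esup _ 0^'+.
have main : forall a e : R, (maxe Lf Lg < a%:E)%E -> 0 < e -> (Lh <= (a + e)%:E)%E.
  move=> a e hLa e0.
  have hfa : (Lf < a%:E)%E by apply: le_lt_trans hLa; rewrite le_max lexx.
  have hga : (Lg < a%:E)%E by apply: le_lt_trans hLa; rewrite le_max lexx orbT.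
  have [_ [Vf hVf <-] hsf] := ereal_inf_lt hfa.
  have [_ [Vg hVg <-] hsg] := ereal_inf_lt hga.
  have hVe : (0^'+ : set_system R) [set t | 0 < t < 1 /\ K / (- ln t) < e].
    near=> t.
    have t0 : 0 < t by near: t; exact: nbhs_right_gt.
    have t1 : t < 1 by near: t; apply: nbhs_right_lt.
    have t2 : t < expR (- (K / e)) by near: t; apply: nbhs_right_lt; exact: expR_gt0.
    split; first by rewrite t0 t1.
    have : ln t < - (K / e).
      by rewrite -[X in _ < X]expRK ltr_ln // posrE expR_gt0.
    move=> hl.
    have L0 : 0 < - ln t by rewrite oppr_gt0 ln_lt0 // t0 t1.
    rewrite ltr_pdivrMr //.
    have : K / e < - ln t by lra.
    by rewrite ltr_pdivrMr // mulrC.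
  set V := Vf `&` Vg `&` [set t | 0 < t < 1 /\ K / (- ln t) < e].
  have hV : (0^'+ : set_system R) V by apply: filterI; [apply: filterI|].
  apply: (@le_trans _ _ (ereal_sup ((box_ratio (graph01 (fun x => (f x * g x)%R))) @` V))).
    by apply: ereal_inf_lbound; exists V.
  apply: ge_ereal_sup => _ [t [[Vft Vgt] [/andP[t0 t1] tK]] <-].
  have [xf [xg [xh [Ef Eg Eh hx]]]] := ratio_bound _ _ _ _ _ hf hg Mb0 hb hMn t0 t1.
  have : (box_ratio (graph01 f) t < a%:E)%E.
    apply: le_lt_trans hsf; apply: ereal_sup_ubound; by exists t.
  have : (box_ratio (graph01 g) t < a%:E)%E.
    apply: le_lt_trans hsg; apply: ereal_sup_ubound; by exists t.
  rewrite Ef Eg Eh !lte_fin lee_fin => hxg hxf.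
  have : Num.max xf xg < a by rewrite gt_max hxf hxg.
  rewrite -/K in hx.
  lra.
case hL: (maxe Lf Lg) => [r| |].
- apply/lee_addgt0Pr => ep ep0.
  have h2 : 0 < ep / 2 by lra.
  have := main (r + ep / 2) (ep / 2); rewrite hL lte_fin.
  have -> : r + ep / 2 + ep / 2 = r + ep by field.
  rewrite EFinD; apply; lra.
- exact: leey.
- have -> : Lh = (-oo)%E; last by [].
  apply: eq_ninfty => r.
  have := main (r - 1) 1; rewrite hL ltNye.
  have -> : r - 1 + 1 = r by ring.
  by apply.
Unshelve. all: by end_near.
Qed.
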